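(* Consider the $k$-agent prophet game with random tie-breaking, and assume $n\ge k$. In every Nash equilibrium $S$ of the game, the expected social welfare satisfies $$\sum_{i=1}^k u_i(S)\ \ge\ \frac12\,\mathbb{E}\Big[\sum_{j=1}^{k}y_j\Big].$$
   Context: Prophet game with competing agents: there are $n$ rewards $v_1,\ldots,v_n$, where $v_t$ is a non-negative real random variable drawn from a known distribution $F_t$ (with finite mean), independently across $t$. There are $k$ agents. At each time $t=1,\ldots,n$, the value $v_t$ is revealed to all agents, and every active agent (an agent who has not yet received a reward) decides whether to select $v_t$. If exactly one agent selects $v_t$, it is assigned to that agent. If several agents select it, it is assigned to one of them by the tie-breaking rule. Under random tie-breaking, the reward goes to a uniformly random agent among those selecting it. An agent who receives a reward becomes inactive, and unselected rewards are lost forever. A strategy of an agent is a (possibly randomized) rule that, for each $t$, decides whether to select $v_t$ based on $t$, the realized value $v_t$, and the set of currently active agents. The utility $u_i(S)$ of agent $i$ under strategy profile $S=(S_i,S_{-i})$ is her expected received reward (zero if she receives none). A strategy profile $S$ is a Nash equilibrium if for every agent $i$ and every strategy $S_i'$, $u_i(S_i',S_{-i})\le u_i(S)$. For $j=1,\ldots,n$, $y_j$ denotes the $j$-th largest value among $v_1,\ldots,v_n$. *)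

(* Defs.v *)
From HB Require Import structures.
From mathcomp Require Import all_boot all_order all_algebra.
From mathcomp Require Import all_classical all_reals all_analysis.
Set Implicit Arguments. Unset Strict Implicit. Unset Printing Implicit Defensive.
Import Order.TTheory GRing.Theory Num.Theory.
Local Open Scope ring_scope.
Local Open Scope ereal_scope.

Section Prophet.
Variables (R : realType) (n k : nat).
(* F t : the distribution of the reward v_t (time t = 0, ..., n-1; later
   indices are irrelevant). *)
Variable F : nat -> probability R R.

(* A (behavioural) strategy of one agent: [s t v A] is the probability with
   which the agent selects v_t = v at time t when the active set is A. *)
Definition strategy := nat -> R -> {set 'I_k} -> R.

Definition valid_strategy (s : strategy) : Prop :=
  (forall t v A, (0 <= s t v A <= 1)%R) /\
  (forall t A, measurable_fun setT (fun v => s t v A)).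

Definition profile := 'I_k -> strategy.

Definition valid_profile (S : profile) : Prop := forall i, valid_strategy (S i).

Definition sel_prob (S : profile) (t : nat) (v : R) (A B : {set 'I_k}) : R :=
  (\prod_(j in B) S j t v A * \prod_(j in A :\: B) (1 - S j t v A))%R.

(* expected reward of agent i at time t, given that exactly B selects the
   value v, with random tie-breaking, and continuation values W *)
Definition outcome (W : {set 'I_k} -> 'I_k -> \bar R) (v : R)
    (A B : {set 'I_k}) (i : 'I_k) : \bar R :=
  if B == finset.set0 then W A i
  else \sum_(j in B) ((#|B|%:R)^-1)%:E *
          (if j == i then v%:E else W (A :\ j) i).

(* [cont S m t A i] : expected total reward collected by agent i during the
   rounds t, t+1, ..., t+m-1, when the set of active agents at the start of
   round t is A (law of total expectation over the independent v_t, the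
   selection coins and the tie-breaking). *)
Fixpoint cont (S : profile) (m t : nat) (A : {set 'I_k}) (i : 'I_k) : \bar R :=
  match m with
  | 0 => 0
  | m'.+1 =>
      \int[F t]_v (\sum_(B in {set 'I_k} | B \subset A)
                     (sel_prob S t v A B)%:E * outcome (cont S m' t.+1) v A B i)
  end.

Definition utility (S : profile) (i : 'I_k) : \bar R := cont S n 0 [set: 'I_k] i.

Definition deviate (S : profile) (i : 'I_k) (s' : strategy) : profile :=
  fun j => if j == i then s' else S j.

Definition nash (S : profile) : Prop :=
  valid_profile S /\
  forall (i : 'I_k) (s' : strategy), valid_strategy s' ->
    utility (deviate S i s') i <= utility S i.

(* iterated expectation over independent v_t ~ F t, t = t0, ..., t0+m-1
   (product measure, via Tonelli, for nonnegative integrands) *)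
Fixpoint iexp (m t0 : nat) (g : seq R -> \bar R) : \bar R :=
  match m with
  | 0 => g [::]
  | m'.+1 => \int[F t0]_x iexp m' t0.+1 (fun s => g (x :: s))
  end.

Definition top_sum (vs : seq R) : R :=
  (\sum_(x <- take k (sort (fun x y : R => y <= x)%R vs)) x)%R.

End Prophet.

(* Main.v *)
Require Import Defs.
From HB Require Import structures.
From mathcomp Require Import all_boot all_order all_algebra.
From mathcomp Require Import all_classical all_reals all_analysis.
From mathcomp Require Import measurable_realfun.
From mathcomp Require Import ring lra.
Import Order.TTheory GRing.Theory Num.Theory.
Local Open Scope ring_scope.
Local Open Scope ereal_scope.

Lemma le_int (R : realType) (mu : probability R R) (f g : R -> \bar R) :
  (forall x, 0 <= g x) -> (forall x, f x <= g x) ->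
  \int[mu]_x f x <= \int[mu]_x g x.
Proof.
move=> g0 fg; rewrite integralE.
apply: (@le_trans _ _ (\int[mu]_x f^\+ x)).
  rewrite -[X in _ <= X]sube0; apply: leeB => //.
  by apply: integral_ge0 => x _; exact: funeneg_ge0.
rewrite (ge0_integralTE mu g0) ge0_integralTE; last by move=> x; exact: funepos_ge0.
apply: ereal_sup_le => _ [h hf <-]; exists h => //= x.
apply: le_trans (hf x) _; rewrite funeposE ge_max fg g0 //.
Qed.

Definition hf {R : realType} (th v : R) : R := (Num.max (v - th) 0)%R.

Lemma hf_ge0 {R : realType} (th v : R) : (0 <= hf th v)%R.
Proof. by rewrite /hf le_max lexx orbT. Qed.

Lemma hmeas {R : realType} (th : R) :
  measurable_fun setT (fun v : R => (hf th v)%:E).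
Proof.
apply/measurable_EFinP.
rewrite (_ : hf th = ((fun v => v - th) \max (fun=> 0))%R) //.
apply: measurable_maxr => //.
exact: measurable_funB.
Qed.

Lemma int_affine {R : realType} (mu : probability R R) (r c th : R) :
  (0 <= r)%R -> (0 <= c)%R ->
  \int[mu]_v (r%:E + (c * hf th v)%:E) = r%:E + c%:E * \int[mu]_v (hf th v)%:E.
Proof.
move=> r0 c0.
rewrite ge0_integralD //; last 2 first.
- by move=> v _; rewrite lee_fin mulr_ge0 // hf_ge0.
- under eq_fun do rewrite EFinM.
  apply: measurable_funeM; exact: hmeas.
congr (_ + _).
  rewrite integral_cst // -[RHS]mule1; congr (_ * _); exact: probability_setT.
under eq_integral do rewrite EFinM.
rewrite ge0_integralZl //; first exact: hmeas.
by move=> v _; rewrite lee_fin hf_ge0.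
Qed.

Lemma iexp_ge0 {R : realType} (F : nat -> probability R R) m t0 (g : seq R -> \bar R) :
  (forall s, 0 <= g s) -> 0 <= iexp F m t0 g.
Proof.
elim: m t0 g => [|m IH] t0 g g0 /=; first exact: g0.
by apply: integral_ge0 => x _; apply: IH => s; exact: g0.
Qed.

Lemma iexp_mono {R : realType} (F : nat -> probability R R) m t0 (g G : seq R -> \bar R) :
  (forall s, 0 <= G s) -> (forall s, g s <= G s) -> iexp F m t0 g <= iexp F m t0 G.
Proof.
elim: m t0 g G => [|m IH] t0 g G G0 gG /=; first exact: gG.
apply: le_int => x; first by apply: iexp_ge0 => s; exact: G0.
by apply: IH => s; [exact: G0 | exact: gG].
Qed.

Lemma iexp0 {R : realType} (F : nat -> probability R R) m t0 :
  iexp F m t0 (fun=> 0) = 0.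
Proof.
elim: m t0 => [|m IH] t0 //=.
under eq_integral do rewrite IH.
exact: integral0.
Qed.

Lemma iexp_lin {R : realType} (F : nat -> probability R R) (th : R) m t0 (a : R) :
  (0 <= a)%R ->
  iexp F m t0 (fun s => (a + \sum_(x <- s) hf th x)%:E) =
  a%:E + \sum_(j < m) \int[F (t0 + j)%N]_v (hf th v)%:E.
Proof.
elim: m t0 a => [|m IH] t0 a a0 /=.
  by rewrite big_nil addr0 big_ord0 adde0.
have E : forall x, iexp F m t0.+1 (fun s => (a + \sum_(y <- x :: s) hf th y)%:E)
   = (a + hf th x)%:E + \sum_(j < m) \int[F (t0.+1 + j)%N]_v (hf th v)%:E.
  move=> x; rewrite -IH; last by rewrite addr_ge0 // hf_ge0.
  congr iexp; apply: funext => s; by rewrite big_cons addrA.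
under eq_integral do rewrite E EFinD.
rewrite ge0_integralD //; [ |
  by move=> x _; rewrite adde_ge0 // lee_fin // hf_ge0 |
  apply: emeasurable_funD; [exact: measurable_cst | exact: hmeas] |
  by move=> x _; apply: sume_ge0 => j _; apply: integral_ge0 => v _; rewrite lee_fin hf_ge0].
rewrite ge0_integralD //; [ | by move=> x _; rewrite lee_fin hf_ge0 | exact: hmeas].
rewrite [X in X + _ + _]integral_cst // [X in _ + X]integral_cst //.
rewrite big_ord_recl addn0 -addeA; congr (_ + (_ + _)).
  by rewrite -[RHS]mule1; congr (_ * _); exact: probability_setT.
rewrite -[RHS]mule1; congr (_ * _); last exact: probability_setT.
by apply: eq_bigr => j _; rewrite addSnnS.
Qed.

Lemma sum_cst_seq {R : realType} (s : seq R) (c : R) :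
  (\sum_(x <- s) c = c *+ size s)%R.
Proof.
by elim: s => [|x s IH]; rewrite ?big_nil ?mulr0n // big_cons IH mulrS.
Qed.

Lemma top_sum_le {R : realType} (k : nat) (th : R) (vs : seq R) :
  (0 <= th)%R ->
  (top_sum k vs <= k%:R * th + \sum_(x <- vs) hf th x)%R.
Proof.
move=> th0; rewrite /top_sum.
set s' := sort _ vs.
apply: (@le_trans _ _ (\sum_(x <- take k s') (th + hf th x))%R).
  by apply: ler_sum => x _; rewrite -lerBlDl /hf le_max lexx.
rewrite big_split /= sum_cst_seq; apply: lerD.
  rewrite -[(th *+ _)%R]mulr_natl; apply: ler_wpM2r => //.
  by rewrite ler_nat size_take_min geq_minl.
have Hp : perm_eq s' vs by rewrite perm_sort perm_refl.
rewrite -(perm_big _ Hp).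
rewrite -[X in (_ <= \sum_(x <- X) _)%R](cat_take_drop k s') big_cat /=.
by rewrite lerDl sumr_ge0 // => x _; exact: hf_ge0.
Qed.

Lemma arith {R : realType} (r th v ki N : R) : (0 <= r)%R -> (r <= th)%R -> (th <= v)%R ->
  (0 <= ki)%R -> (0 <= N)%R ->
  (ki <= (N+1)^-1)%R -> (r + ki * (v - th) <= (N+1)^-1 * v + (N+1)^-1 * r * N)%R.
Proof.
move=> r0 rth thv ki0 N0 kin.
have N1 : (N + 1 != 0)%R by rewrite gt_eqF // ltr_wpDl.
have h : ((N + 1)^-1 * (N + 1) = 1)%R by rewrite mulVf.
set ni := ((N + 1)^-1)%R in kin h *.
have h1 : (0 <= (ni - ki) * (v - th))%R by rewrite mulr_ge0 // subr_ge0.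
have ni0 : (0 <= ni)%R by lra.
have h2 : (0 <= ni * (th - r))%R by rewrite mulr_ge0 // subr_ge0.
have h3 : (ni * r * N = r - ni * r)%R.
  by rewrite -mulrA [(r * N)%R]mulrC mulrA -{2}[r]mul1r -h; ring.
rewrite h3; nra.
Qed.

Lemma sel_sum {R : realType} k (p : 'I_k -> R) (A : {set 'I_k}) :
 (\sum_(B in {set 'I_k} | B \subset A) (\prod_(j in B) p j * \prod_(j in A :\: B) (1 - p j)) = 1)%R.
Proof.
pose Fp j := if j \in A then p j else 0%R.
pose Gp j := if j \in A then (1 - p j)%R else 1%R.
have H := bigA_distr 1%R +%R Fp Gp.
have E1 : (\prod_i (Fp i + Gp i) = 1)%R.
  by apply: big1 => j _; rewrite /Fp /Gp; case: ifP => _; rewrite ?subrKC ?add0r.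
rewrite E1 (bigID (fun J : {set 'I_k} => J \subset A)) /= in H.
rewrite [X in (_ + X)%R]big1 ?addr0 in H; last first.
  move=> J /subsetPn [j jJ jA]; rewrite (bigD1 j) //= jJ /Fp (negbTE jA) mul0r //.
rewrite [RHS]H; apply: eq_big => // J /andP [_ JA].
rewrite [RHS](bigID (mem J)) /=; congr (_ * _)%R.
  by apply: eq_big => // j jJ; rewrite jJ /Fp (fintype.subsetP JA j jJ).
rewrite [RHS](bigID (mem A)) /= [X in (_ * X)%R]big1 ?mulr1; last first.
  by move=> j /andP [jJ /negbTE jA]; rewrite (negbTE jJ) /Gp jA.
apply: eq_big => j; first by rewrite finset.in_setD andbC.
by rewrite finset.in_setD => /andP [/negbTE jJ jA]; rewrite jJ /Gp jA.
Qed.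

Lemma sel_ge0 {R : realType} k (Q : profile R k) t v A B :
  (forall j, 0 <= Q j t v A <= 1)%R -> (0 <= sel_prob Q t v A B)%R.
Proof.
move=> HQ; rewrite /sel_prob mulr_ge0 //.
  by apply: prodr_ge0 => j _; case/andP: (HQ j).
by apply: prodr_ge0 => j _; rewrite subr_ge0; case/andP: (HQ j).
Qed.

Definition Dth {R : realType} {k : nat} (th : R) : strategy R k :=
  fun t v A => if (th <= v)%R then 1%R else 0%R.

Section Key.
Variables (R : realType) (k : nat) (F : nat -> probability R R).
Variables (S : profile R k) (i : 'I_k) (th : R).
Hypothesis th0 : (0 <= th)%R.
Hypothesis HS : forall j t v A, (0 <= S j t v A <= 1)%R.

Let P := deviate S i (Dth th).

Let P01 j t v A : (0 <= P j t v A <= 1)%R.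
Proof.
rewrite /P /deviate; case: eqP => _; last exact: HS.
by rewrite /Dth; case: ifP => _; rewrite ?lexx ?ler01.
Qed.

Let Pi t v A : P i t v A = if (th <= v)%R then 1%R else 0%R.
Proof. by rewrite /P /deviate eqxx. Qed.

Lemma key m : forall t (A : {set 'I_k}), i \in A ->
  mine th%:E ((k%:R^-1)%:E * \sum_(s < m) \int[F (t + s)%N]_v (hf th v)%:E)
    <= cont F P m t A i.
Proof.
elim: m => [|m IH] t A iA.
  by rewrite big_ord0 mule0 /= ge_min lexx orbT.
set Y := \sum_(s < m) \int[F (t.+1 + s)%N]_v (hf th v)%:E.
have Y0 : 0 <= Y.
  by apply: sume_ge0 => s _; apply: integral_ge0 => v _; rewrite lee_fin hf_ge0.
have ki0 : (0 <= k%:R^-1 :> R)%R by rewrite invr_ge0.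
set mu := mine th%:E ((k%:R^-1)%:E * Y).
have mu0 : 0 <= mu by rewrite le_min lee_fin th0 mule_ge0 // lee_fin.
have muth : mu <= th%:E by rewrite ge_min lexx.
have muf : mu \is a fin_num.
  by rewrite ge0_fin_numE // (le_lt_trans muth) // ltry.
set r := fine mu.
have Er : mu = r%:E by rewrite fineK.
have r0 : (0 <= r)%R by rewrite -lee_fin -Er.
have rth : (r <= th)%R by rewrite -lee_fin -Er.
have IH' : forall A' : {set 'I_k}, i \in A' -> r%:E <= cont F P m t.+1 A' i.
  by move=> A' iA'; rewrite -Er; exact: IH.
set c := \int[F t]_v (hf th v)%:E.
have c0 : 0 <= c by apply: integral_ge0 => v _; rewrite lee_fin hf_ge0.
apply: (@le_trans _ _ (r%:E + (k%:R^-1)%:E * c)).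
  rewrite big_ord_recl addn0.
  rewrite (_ : \sum_(s < m) \int[F (t + bump 0 s)%N]_v (hf th v)%:E = Y); last first.
    by apply: eq_bigr => s _; rewrite /bump /= add1n addnS addSn.
  rewrite ge0_muleDr // -Er /mu.
  have X0 : 0 <= (k%:R^-1)%:E * c by rewrite mule_ge0 // lee_fin.
  have Z0 : 0 <= (k%:R^-1)%:E * Y by rewrite mule_ge0 // lee_fin.
  rewrite [X in _ <= X + _]minEle; case: ifP => hth.
    by rewrite ge_min leeDl.
  by rewrite ge_min addeC lexx orbT.
rewrite -int_affine // /=.
have PW : forall v, (r + k%:R^-1 * hf th v)%:E <=
    \sum_(B in {set 'I_k} | B \subset A)
      (sel_prob P t v A B)%:E * outcome (cont F P m t.+1) v A B i.
  move=> v.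
  set cst := (r + k%:R^-1 * hf th v)%R.
  have Ecst : cst%:E = \sum_(B in {set 'I_k} | B \subset A) (sel_prob P t v A B * cst)%:E.
    by rewrite sumEFin -big_distrl /= /sel_prob (sel_sum _ (fun j : 'I_k => P j t v A) A) mul1r.
  rewrite Ecst; apply: lee_sum => B /andP [_ BA].
  rewrite EFinM.
  have sel0 : (0 <= sel_prob P t v A B)%R by apply: sel_ge0 => j; exact: P01.
  have kB : (#|B| <= k)%N by rewrite -[k in (_ <= k)%N]card_ord max_card.
  case: (boolP (th <= v)%R) => hv; case: (boolP (i \in B)) => iB.
  - apply: lee_wpmul2l; first by rewrite lee_fin.
    rewrite /outcome (_ : (B == finset.set0) = false); last first.
      by apply/negbTE/finset.set0Pn; exists i.
    apply: (@le_trans _ _ (\sum_(j in B) ((#|B|%:R^-1) * (if j == i then v else r))%:E)).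
      rewrite sumEFin lee_fin (big_setD1 i iB) /= eqxx.
      rewrite (eq_bigr (fun=> #|B|%:R^-1 * r)%R); last first.
        by move=> j; rewrite finset.in_setD1 => /andP [/negbTE -> _].
      rewrite sumr_const.
      have cB := cardsD1 i B; rewrite iB in cB.
      rewrite cB /cst /hf max_l ?subr_ge0 //.
      rewrite (_ : ((true + #|B :\ i|)%:R = #|B :\ i|%:R + 1 :> R)%R); last first.
        by rewrite natrD addrC.
      rewrite -[((_ * r) *+ #|B :\ i|)%R]mulr_natr.
      apply: arith => //.
      have Bp : (0 < #|B|)%N by rewrite cB.
      rewrite (_ : (#|B :\ i|%:R + 1 = #|B|%:R :> R)%R); last first.
        by rewrite cB natrD addrC.
      rewrite lef_pV2 ?posrE ?ltr0n ?ler_nat //.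
      exact: leq_trans Bp kB.
    apply: lee_sum => j jB; case: eqP => ji; first by rewrite EFinM.
    rewrite EFinM; apply: lee_wpmul2l; first by rewrite lee_fin invr_ge0.
    apply: IH'; rewrite finset.in_setD1 iA andbT; apply/eqP => h; apply: ji; by rewrite h.
  - have -> : sel_prob P t v A B = 0%R.
      rewrite /sel_prob [X in (_ * X)%R](bigD1 i) /=; last by rewrite finset.in_setD iB iA.
      by rewrite Pi hv subrr mul0r mulr0.
    by rewrite !mul0e.
  - have -> : sel_prob P t v A B = 0%R.
      rewrite /sel_prob [X in (X * _)%R](bigD1 i) //=.
      by rewrite Pi (negbTE hv) mul0r mul0r.
    by rewrite !mul0e.
  - apply: lee_wpmul2l; first by rewrite lee_fin.
    rewrite /cst /hf max_r ?mulr0 ?addr0; last first.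
      by rewrite subr_le0 ltW // ltNge.
    rewrite /outcome; case: ifP => B0; first exact: IH'.
    apply: (@le_trans _ _ (\sum_(j in B) ((#|B|%:R^-1) * r)%:E)).
      rewrite sumEFin lee_fin sumr_const -[(_ *+ #|B|)%R]mulr_natr mulrAC mulVf ?mul1r //.
      by rewrite pnatr_eq0 -lt0n card_gt0 B0.
    apply: lee_sum => j jB; rewrite EFinM; apply: lee_wpmul2l; first by rewrite lee_fin invr_ge0.
    have ji : j != i by apply/eqP => h; rewrite -h jB in iB.
    have -> : (j == i) = false by apply/negbTE.
    by apply: IH'; rewrite finset.in_setD1 iA andbT eq_sym.
apply: le_int => v; last exact: PW.
by apply: le_trans (PW v); rewrite lee_fin addr_ge0 // mulr_ge0 // hf_ge0.
Qed.
End Key.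

Lemma Dvalid {R : realType} {k : nat} (th : R) : valid_strategy (@Dth R k th).
Proof.
split.
  by move=> t v A; rewrite /Dth; case: ifP => _; rewrite ?lexx ?ler01.
move=> t A; apply: nondecreasing_measurable => // x y xy.
rewrite /Dth; case: ifP => hx; case: ifP => hy //.
by move: hy; rewrite (le_trans hx xy).
Qed.

Theorem mainTheorem4 (R : realType) (n k : nat) (F : nat -> probability R R)
  (Hnk : (k <= n)%N)
  (Hnonneg : forall t, (t < n)%N -> F t [set x : R | (x < 0)%R]%classic = 0%E)
  (Hmean : forall t, (t < n)%N -> \int[F t]_x `|x%:E| < +oo)
  (S : profile R k) (HS : nash n F S) :
  (2^-1)%:E * iexp F n 0 (fun vs => (top_sum k vs)%:E)
    <= \sum_(i < k) utility n F S i.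
Proof.
case: HS => Hval Hnash.
have HS01 : forall j t v A, (0 <= S j t v A <= 1)%R.
  by move=> j t v A; case: (Hval j) => H _; exact: H.
set C := fun th => \sum_(s < n) \int[F (0 + s)%N]_v (hf th v)%:E.
have C0 : forall th, 0 <= C th.
  by move=> th; apply: sume_ge0 => s _; apply: integral_ge0 => v _; rewrite lee_fin hf_ge0.
set M := fun th => mine th%:E ((k%:R^-1)%:E * C th).
have Hdev : forall th, (0 <= th)%R -> forall i, M th <= utility n F S i.
  move=> th th0 i; apply: le_trans (Hnash i (Dth th) (Dvalid th)).
  rewrite /M /C /utility; exact: (@key _ _ F S i th th0 HS01 n 0 _ (finset.in_setT i)).
have Mf : forall th, (0 <= th)%R -> M th = (fine (M th))%:E /\ (0 <= fine (M th))%R.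
  move=> th th0.
  have M0 : 0 <= M th by rewrite le_min lee_fin th0 mule_ge0 // lee_fin invr_ge0.
  have Mfin : M th \is a fin_num.
    by rewrite ge0_fin_numE // (@le_lt_trans _ _ th%:E) ?ltry // ge_min lexx.
  by rewrite fineK //; split => //; rewrite -lee_fin fineK.
have HSW : forall th, (0 <= th)%R -> (fine (M th) *+ k)%:E <= \sum_(i < k) utility n F S i.
  move=> th th0; apply: (@le_trans _ _ (\sum_(i < k) (fine (M th))%:E)).
    by rewrite sumEFin sumr_const card_ord.
  by apply: lee_sum => i _; rewrite -(Mf th th0).1; exact: Hdev.
have Hopt : forall th, (0 <= th)%R ->
    iexp F n 0 (fun vs => (top_sum k vs)%:E) <= (k%:R * th)%:E + C th.
  move=> th th0.
  apply: (@le_trans _ _ (iexp F n 0 (fun s => (k%:R * th + \sum_(x <- s) hf th x)%:E))).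
    apply: iexp_mono => s; last by rewrite lee_fin top_sum_le.
    by rewrite lee_fin addr_ge0 ?mulr_ge0 // sumr_ge0 // => x _; exact: hf_ge0.
  by rewrite iexp_lin // mulr_ge0.
set OPT := iexp F n 0 _.
set SW := \sum_(i < k) _.
have SW0 : 0 <= SW.
  apply: sume_ge0 => i _; apply: le_trans (Hdev 0%R (lexx _) i).
  by rewrite (Mf 0%R (lexx _)).1 lee_fin (Mf 0%R (lexx _)).2.
case: (ltnP 0 k) => kp; last first.
  have k0 : k = 0%N by apply/eqP; rewrite -leqn0.
  rewrite /OPT (_ : (fun vs => (top_sum k vs)%:E) = fun=> 0); last first.
    by apply: funext => vs; rewrite /top_sum k0 take0 big_nil.
  by rewrite iexp0 mule0.
case E: SW => [s| |]; last by rewrite E in SW0.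
  have s0 : (0 <= s)%R by rewrite -lee_fin -E.
  suff Ho : OPT <= (2 * s)%:E.
    apply: le_trans (lee_wpmul2l _ Ho) _; first by rewrite lee_fin invr_ge0.
    by rewrite -EFinM mulrA mulVf ?mul1r.
  apply/lee_addgt0Pr => e e0.
  have kn0 : (k%:R != 0 :> R)%R by rewrite pnatr_eq0 -lt0n.
  set th := ((s + e) / k%:R)%R.
  have th0 : (0 <= th)%R by rewrite divr_ge0 // addr_ge0 // ltW.
  have Kth : (k%:R * th = s + e)%R by rewrite mulrC mulfVK.
  have H1 := HSW th th0; rewrite -/SW E lee_fin in H1.
  have H2 := Hopt th th0.
  have CS : C th <= s%:E.
    move: H1 (Mf th th0); rewrite /M minEle; case: ifP => hth.
      move=> H1 _; rewrite /= -mulr_natr mulrC Kth in H1.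
      by move: H1; rewrite gerDl leNgt e0.
    move=> H1 [Ek _].
    have -> : C th = (fine ((k%:R^-1)%:E * C th) * k%:R)%:E.
      by rewrite EFinM -Ek muleC muleA -EFinM mulfV ?mul1e.
    by rewrite lee_fin mulr_natr.
  apply: le_trans H2 _; rewrite Kth.
  apply: le_trans (leeD (lexx _) CS) _.
  by rewrite -!EFinD lee_fin (mulr_natl s 2) mulr2n addrAC.
by rewrite leey.
Qed.
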